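(* Let $b$ be a prime, $s\in\mathbb{N}$, $\boldsymbol{k}=(k_1,\dots,k_s)\in\mathbb{N}_0^s$, and write $c_j:=\mu_1(k_j)$ and $u:=\{j\mid k_j\neq0\}$. Then for every $j$ and every $L_j\in\mathcal{L}_{\infty,\infty}$, the integer $\ell_j$ with $\vec\ell_j=L_j^\top\vec k_j$ satisfies $\mu_1(\ell_j)=c_j$. Moreover, for every $\boldsymbol{k}'=(k_1',\dots,k_s')\in\mathbb{N}_0^s$ with $\mu_1(k'_j)=c_j$ for all $j$, and every integer $n\ge\max_jc_j$, \[\Pr\left[L_j^\top\vec{k}_j=\vec{k}'_j\text{ for all }j\;\middle|\;L_j\in\mathcal{L}_{\infty,n}\right]=\left(\frac{b}{b-1}\right)^{|u|}b^{-(c_1+\cdots+c_s)},\] where $L_1,\dots,L_s$ are drawn independently at random from $\mathcal{L}_{\infty,n}$.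
   Context: $\mathbb{F}_b=\{0,\dots,b-1\}$ is the field with $b$ elements. For $k\in\mathbb{N}_0$ with $b$-adic expansion $k=\kappa_0+\kappa_1b+\cdots$, write $\vec{k}=(\kappa_0,\kappa_1,\ldots)^\top\in\mathbb{F}_b^{\mathbb{N}}$. NRT weight: for $k\in\mathbb{N}$ written as $k=\kappa_1b^{c_1-1}+\cdots+\kappa_vb^{c_v-1}$ with $\kappa_i\in\{1,\dots,b-1\}$ and $c_1>\cdots>c_v>0$, $\mu_1(k)=c_1$; $\mu_1(0)=0$. For $w,n\in\mathbb{N}\cup\{\infty\}$, $\mathcal{L}_{w,n}$ is the set of matrices $L=(\ell_{i,j})\in\mathbb{F}_b^{w\times n}$ with $\ell_{i,j}=0$ if $i<j$ and $\ell_{i,j}\neq0$ if $i=j$. A random element of $\mathcal{L}_{w,n}$ is obtained by choosing each entry independently: diagonal entries uniformly from $\mathbb{F}_b\setminus\{0\}$, entries with $i>j$ uniformly from $\mathbb{F}_b$, entries with $i<j$ equal to $0$. For $L\in\mathcal{L}_{\infty,n}$, $L^\top\vec k\in\mathbb{F}_b^n$ is the matrix-vector product over $\mathbb{F}_b$, compared with the first $n$ digits of $\vec k'_j$. *)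

(* Defs.v *)
From mathcomp Require Import all_boot all_order all_algebra.
Unset Printing Implicit Defensive.
Import GRing.Theory Num.Theory.
Local Open Scope ring_scope.

(* F_b is 'F_b (b prime).  Indices of digits / matrix rows and columns are
   0-based: digit i of k is kappa_i (coefficient of b^i), matrix entry
   L i j corresponds to l_{i+1,j+1} of the paper. *)

Definition digit (b k i : nat) : 'F_b := ((k %/ b ^ i) %% b)%N%:R.

(* NRT weight mu_1: 1 + position of the highest nonzero digit, mu_1(0)=0.
   (Digits at positions >= k are zero, so the range i < k.+1 is exhaustive.) *)
Definition mu1 (b k : nat) : nat :=
  \max_(i < k.+1 | digit b k i != 0%R) i.+1.

Definition inLinf (b : nat) (L : nat -> nat -> 'F_b) : Prop :=
  (forall i j, (i < j)%N -> L i j = 0) /\ (forall i, L i i != 0).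

(* (L^T k)_j = sum_i L i j * kappa_i ; the sum is over all i, terms with
   i >= k.+1 vanish since the digits of k vanish there. *)
Definition LTvec (b : nat) (L : nat -> nat -> 'F_b) (k : nat) (j : nat) : 'F_b :=
  \sum_(i < k.+1) L i j * digit b k i.

(* Probability weight of entry (i,j) taking value x, for a random element of
   L_{w,n}: uniform on F_b\{0} on the diagonal, uniform on F_b below it,
   and 0 above it.  Entries are independent. *)
Definition entry_prob (b i j : nat) (x : 'F_b) : rat :=
  if (i < j)%N then (x == 0)%:R
  else if i == j then (x != 0)%:R / (b.-1)%:R
  else 1 / b%:R.

Definition mat_prob (b N n : nat) (M : {ffun 'I_N * 'I_n -> 'F_b}) : rat :=
  \prod_(e : 'I_N * 'I_n) entry_prob b e.1 e.2 (M e).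

(* Pr[ L_j^T k_j = first n digits of k'_j for all j ], L_1..L_s independent
   random elements of L_{N,n}, where the rows are truncated at N (the event
   only depends on rows i < N when all k_j < b^N). *)
Definition prob_event (b s N n : nat) (k k' : 'I_s -> nat) : rat :=
  \sum_(Ls : {ffun 'I_s -> {ffun 'I_N * 'I_n -> 'F_b}})
     (\prod_(j < s) mat_prob b N n (Ls j)) *
     ([forall j : 'I_s, forall c : 'I_n,
        (\sum_(i < N) Ls j (i, c) * digit b (k j) i) == digit b (k' j) c])%:R.

(* Main.v *)
Require Import Defs.
From mathcomp Require Import all_boot all_order all_algebra.
From mathcomp Require Import ring.
Import GRing.Theory Num.Theory.
Local Open Scope ring_scope.

Lemma digit_small (b k i : nat) : prime b -> digit b k i != 0 -> (i < k.+1)%N.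
Proof.
move=> pb; apply: contraR; rewrite -leqNgt => hi.
have b1 : (1 < b)%N by apply: prime_gt1.
have hk : (k < b ^ i)%N.
  by apply: leq_ltn_trans (ltnW hi) _; apply: ltn_expl.
by rewrite /digit divn_small // mod0n.
Qed.

Lemma digit_neq0 (b k i : nat) : prime b -> digit b k i != 0 -> (i < mu1 b k)%N.
Proof.
move=> pb hd; have hi := digit_small _ _ _ pb hd.
rewrite /mu1; exact: (@leq_bigmax_cond _ (fun j : 'I_k.+1 => digit b k j != 0)
   (fun j : 'I_k.+1 => j.+1) (Ordinal hi) hd).
Qed.

Lemma digit_ge (b k i : nat) : prime b -> (mu1 b k <= i)%N -> digit b k i = 0.
Proof.
move=> pb hi; apply/eqP; apply: contraLR hi => /(digit_neq0 _ _ _ pb).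
by rewrite -ltnNge.
Qed.

Lemma mu1_top (b k : nat) : prime b -> (0 < mu1 b k)%N -> digit b k (mu1 b k).-1 != 0.
Proof.
move=> pb; case: (pickP (fun i : 'I_k.+1 => digit b k i != 0)) => [i0 Hi0|H0].
  have hc : (0 < #|(fun i : 'I_k.+1 => digit b k i != 0%R)|)%N.
    by apply/card_gt0P; exists i0.
  have [i1 Hi1 E] := eq_bigmax_cond (fun i : 'I_k.+1 => i.+1) hc.
  by rewrite /mu1 E /=.
by rewrite /mu1 big_pred0.
Qed.

Lemma mu1_uniq (b l m : nat) : prime b ->
  (forall i, digit b l i != 0 -> (i < m)%N) ->
  ((0 < m)%N -> digit b l m.-1 != 0) -> mu1 b l = m.
Proof.
move=> pb h1 h2; apply/eqP; rewrite eqn_leq; apply/andP; split.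
  case: (posnP (mu1 b l)) => [->//|hp].
  have := h1 _ (mu1_top _ _ pb hp); by case: (mu1 b l) hp.
case: (posnP m) => [->//|hp].
have := digit_neq0 _ _ _ pb (h2 hp); by case: m hp {h1 h2}.
Qed.

Lemma mu1_eq0 (b k : nat) : prime b -> (mu1 b k == 0%N) = (k == 0%N).
Proof.
move=> pb; have b1 : (1 < b)%N by apply: prime_gt1.
case: (posnP k) => [->|kp].
  apply/eqP; apply: mu1_uniq => // [i]; by rewrite /digit div0n mod0n eqxx.
apply/negbTE; rewrite -lt0n.
set i := trunc_log b k.
have h1 := trunc_logP b1 kp; have h2 := trunc_log_ltn k b1.
have bp : (0 < b ^ i)%N by rewrite expn_gt0 ltnW.
have q1 : (0 < k %/ b ^ i)%N by rewrite divn_gt0.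
have q2 : (k %/ b ^ i < b)%N by rewrite ltn_divLR // -expnS.
have : digit b k i != 0.
  apply/eqP => /(congr1 val); rewrite /digit /= val_Fp_nat // !modn_small // => E.
  by rewrite E in q1.
by move/(digit_neq0 _ _ _ pb); case: (mu1 b k).
Qed.

Fixpoint hornr (b : nat) (d : nat -> nat) (M : nat) : nat :=
  match M with 0 => 0 | M'.+1 => d 0 + b * hornr b (fun i => d i.+1) M' end%N.

Lemma hornr_digit (b : nat) d M i : (1 < b)%N -> (forall j, d j < b)%N ->
  ((hornr b d M %/ b ^ i) %% b = if (i < M)%N then d i else 0)%N.
Proof.
move=> b1; elim: M d i => [|M IH] d i hd /=.
  by rewrite div0n mod0n; case: i.
have b0 : (0 < b)%N by apply: ltnW.
case: i => [|i].
  by rewrite expn0 divn1 addnC mulnC modnMDl modn_small.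
rewrite expnS mulnC divnMA addnC divnMDl // (divn_small (hd 0%N)) addn0 (IH (fun i => d i.+1)) //.
Qed.


Lemma LTvec_ge (b : nat) L k i : prime b -> inLinf b L -> (mu1 b k <= i)%N -> LTvec b L k i = 0.
Proof.
move=> pb [hL _] hi; rewrite /LTvec big1 // => j _.
case: (ltnP j i) => h; first by rewrite hL // mul0r.
by rewrite (digit_ge _ _ _ pb (leq_trans hi h)) mulr0.
Qed.

Lemma LTvec_top (b : nat) L k : prime b -> inLinf b L -> (0 < mu1 b k)%N ->
  LTvec b L k (mu1 b k).-1 != 0.
Proof.
move=> pb [hL hD] hp; have hd := mu1_top _ _ pb hp.
have hs := digit_small _ _ _ pb hd.
rewrite /LTvec (bigD1 (Ordinal hs)) //= big1 ?addr0.
  by rewrite mulf_neq0.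
move=> j hj; case: (ltnP j (mu1 b k).-1) => h; first by rewrite hL // mul0r.
have hj' : (mu1 b k <= j)%N.
  rewrite -(prednK hp); rewrite ltn_neqAle h andbT.
  by apply: contra hj => /eqP E; apply/eqP/val_inj; rewrite /= E.
by rewrite (digit_ge _ _ _ pb hj') mulr0.
Qed.

Lemma part1 (b : nat) L k : prime b -> inLinf b L ->
  exists l : nat, (forall i, digit b l i = LTvec b L k i) /\ mu1 b l = mu1 b k.
Proof.
move=> pb hL; have b1 : (1 < b)%N by apply: prime_gt1.
set c := mu1 b k.
have hlt : forall i, (nat_of_ord (LTvec b L k i) < b)%N.
  by move=> i; have := ltn_ord (LTvec b L k i); rewrite [X in (_ < X)%N -> _]Fp_cast.
exists (hornr b (fun i => nat_of_ord (LTvec b L k i)) c).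
have hdig : forall i, digit b (hornr b (fun i => nat_of_ord (LTvec b L k i)) c) i = LTvec b L k i.
  move=> i; rewrite /digit hornr_digit //; case: ifP => hi.
    by apply: val_inj; rewrite /= val_Fp_nat // modn_small.
  by rewrite LTvec_ge // leqNgt hi.
split => //; apply: mu1_uniq => // [i|hp]; rewrite hdig.
  by apply: contraR; rewrite -leqNgt => hi; rewrite LTvec_ge.
exact: LTvec_top.
Qed.


Definition Pv (b N c : nat) (v : {ffun 'I_N -> 'F_b}) : rat :=
  \prod_(i < N) entry_prob b i c (v i).
Definition Sv (b N kk : nat) (v : {ffun 'I_N -> 'F_b}) : 'F_b :=
  \sum_(i < N) v i * digit b kk i.
Definition colA (b N c kk : nat) (a : 'F_b) : rat :=
  \sum_(v : {ffun 'I_N -> 'F_b}) Pv b N c v * (Sv b N kk v == a)%:R.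

Lemma sum_pred1 (T : finType) (x : T) : \sum_(a : T) ((x == a)%:R : rat) = 1.
Proof.
rewrite (bigD1 x) //= eqxx big1 ?addr0 // => a; rewrite eq_sym => /negbTE -> //.
Qed.

Lemma bm1_neq0 (b : nat) : prime b -> ((b.-1)%:R : rat) != 0.
Proof. by move=> pb; rewrite pnatr_eq0 -lt0n -ltnS prednK ?prime_gt1 // prime_gt0. Qed.

Lemma b_neq0 (b : nat) : prime b -> (b%:R : rat) != 0.
Proof. by move=> pb; rewrite pnatr_eq0 -lt0n prime_gt0. Qed.

Lemma sum_entry (b i c : nat) : prime b -> \sum_(x : 'F_b) entry_prob b i c x = 1.
Proof.
move=> pb; rewrite /entry_prob; case: (i < c)%N.
  rewrite (bigD1 0) //= big1 ?addr0 ?eqxx // => x /negbTE ->//.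
case: (i == c).
  rewrite -mulr_suml (eq_bigr (fun x : 'F_b => if x != 0 then 1 else 0)); last by move=> x _; case: (x != 0).
  rewrite -big_mkcond /= sumr_const cardC1 card_Fp //.
  by rewrite mulr_natl -mulr_natl mulfV // bm1_neq0.
by rewrite sumr_const card_Fp // mul1r -[_ *+ b]mulr_natr mulVf ?b_neq0.
Qed.

Lemma sumP (b N c : nat) : prime b -> \sum_(v : {ffun 'I_N -> 'F_b}) Pv b N c v = 1.
Proof.
move=> pb; rewrite /Pv -(bigA_distr_bigA (fun (i : 'I_N) (x : 'F_b) => entry_prob b i c x)) /=.
by rewrite big1 // => i _; rewrite sum_entry.
Qed.

Lemma sum_colA (b N c kk : nat) : prime b -> \sum_(a : 'F_b) colA b N c kk a = 1.
Proof.
move=> pb; rewrite /colA exchange_big /=.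
rewrite -[RHS](sumP b N c pb); apply: eq_bigr => v _.
by rewrite -mulr_sumr sum_pred1 mulr1.
Qed.

Lemma P_supp (b N c : nat) (v : {ffun 'I_N -> 'F_b}) (i : 'I_N) :
  Pv b N c v != 0 -> (i < c)%N -> v i = 0.
Proof.
move=> hP hi; apply/eqP; apply: contraNT hP => hv.
by rewrite /Pv (bigD1 i) //= /entry_prob hi (negbTE hv) mul0r.
Qed.

Lemma colA_ge (b N c kk : nat) : prime b -> (mu1 b kk <= c)%N ->
  colA b N c kk 0 = 1.
Proof.
move=> pb hc; rewrite /colA -[RHS](sumP b N c pb); apply: eq_bigr => v _.
case: (eqVneq (Pv b N c v) 0) => [->|hP]; first by rewrite mul0r.
suff -> : Sv b N kk v = 0 by rewrite eqxx mulr1.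
rewrite /Sv big1 // => i _; case: (ltnP i c) => h.
  by rewrite (P_supp _ _ _ _ _ hP h) mul0r.
by rewrite (digit_ge _ _ _ pb (leq_trans hc h)) mulr0.
Qed.

Lemma colA_mid (b N c kk : nat) (i0 : 'I_N) (a : 'F_b) : prime b ->
  nat_of_ord i0 = (mu1 b kk).-1 -> (c < i0)%N -> colA b N c kk a = 1 / b%:R.
Proof.
move=> pb hi0 hc.
have hm : (0 < mu1 b kk)%N by case: (mu1 b kk) hi0 hc => //= ->.
have hk : digit b kk i0 != 0 by rewrite hi0 mu1_top.
have eqA : forall a a', colA b N c kk a = colA b N c kk a'.
  move=> a1 a2; set t := (a1 - a2) / digit b kk i0.
  pose h := fun v : {ffun 'I_N -> 'F_b} => [ffun i => v i + (i == i0)%:R * t].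
  have hinj : injective h.
    move=> v w /ffunP E; apply/ffunP => i; have := E i; rewrite !ffunE; exact: addIr.
  rewrite /colA (reindex_inj hinj) /=; apply: eq_bigr => v _.
  have -> : Pv b N c (h v) = Pv b N c v.
    rewrite /Pv; apply: eq_bigr => i _; rewrite ffunE.
    case: (eqVneq i i0) => [->|ne]; last by rewrite mul0r addr0.
    by rewrite /entry_prob ltnNge (ltnW hc) /= (gtn_eqF hc).
  have -> : Sv b N kk (h v) = Sv b N kk v + t * digit b kk i0.
    rewrite /Sv; under eq_bigr do rewrite ffunE mulrDl.
    rewrite big_split /=; congr (_ + _).
    rewrite (bigD1 i0) //= eqxx mul1r big1 ?addr0 // => i /negbTE ->.
    by rewrite !mul0r.
  have key : forall x : 'F_b, (x + (a1 - a2) == a1) = (x == a2).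
    move=> x; apply/eqP/eqP => E.
      by have := congr1 (fun y => y - (a1 - a2)) E; rewrite addrK => ->; ring.
    by rewrite E; ring.
  by rewrite /t divfK // key.
have := sum_colA b N c kk pb.
rewrite (eq_bigr (fun _ => colA b N c kk a)) => [|a' _]; last exact: eqA.
rewrite sumr_const card_Fp // => H.
have H' : colA b N c kk a * b%:R = 1 by rewrite mulr_natr.
by apply: (mulIf (b_neq0 _ pb)); rewrite H' divfK // b_neq0.
Qed.

Lemma colA_top (b N c kk : nat) (i0 : 'I_N) (a : 'F_b) : prime b ->
  nat_of_ord i0 = (mu1 b kk).-1 -> (0 < mu1 b kk)%N -> c = i0 -> a != 0 ->
  colA b N c kk a = 1 / (b.-1)%:R.
Proof.
move=> pb hi0 hm hc ha.
have hk : digit b kk i0 != 0 by rewrite hi0 mu1_top.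
pose B a := \sum_(v : {ffun 'I_N -> 'F_b}) Pv b N c v * (v i0 * digit b kk i0 == a)%:R.
have E1 : forall a, colA b N c kk a = B a.
  move=> a1; apply: eq_bigr => v _.
  case: (eqVneq (Pv b N c v) 0) => [->|hP]; first by rewrite !mul0r.
  suff -> : Sv b N kk v = v i0 * digit b kk i0 by [].
  rewrite /Sv (bigD1 i0) //= big1 ?addr0 // => i ne.
  case: (ltnP i c) => h; first by rewrite (P_supp _ _ _ _ _ hP h) mul0r.
  have hmi : (mu1 b kk <= i)%N.
    rewrite -(prednK hm) -hi0 ltn_neqAle -hc h andbT.
    by apply: contra ne => /eqP E; apply/eqP/val_inj; rewrite /= -E hc.
  by rewrite (digit_ge _ _ _ pb hmi) mulr0.
have B0 : B 0 = 0.
  rewrite /B big1 // => v _; case: (eqVneq (v i0) 0) => h0.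
    by rewrite /Pv (bigD1 i0) //= /entry_prob hc ltnn eqxx h0 eqxx /= !mul0r.
  by rewrite (negbTE (mulf_neq0 h0 hk)) mulr0.
have eqB : forall a1 a2, a1 != 0 -> a2 != 0 -> B a1 = B a2.
  move=> a1 a2 h1 h2; set t := a1 / a2.
  have ht : t != 0 by rewrite mulf_neq0 ?invr_eq0.
  pose h := fun v : {ffun 'I_N -> 'F_b} => [ffun i => if i == i0 then t * v i else v i].
  have hinj : injective h.
    move=> v w /ffunP E; apply/ffunP => i; have := E i; rewrite !ffunE.
    by case: (i == i0) => //; apply: mulfI.
  rewrite /B (reindex_inj hinj) /=; apply: eq_bigr => v _.
  have -> : Pv b N c (h v) = Pv b N c v.
    rewrite /Pv; apply: eq_bigr => i _; rewrite ffunE.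
    case: (eqVneq i i0) => [->|ne] //.
    by rewrite /entry_prob hc ltnn eqxx mulf_eq0 (negbTE ht).
  rewrite ffunE eqxx -mulrA.
  have key : forall x : 'F_b, (t * x == a1) = (x == a2).
    move=> x; apply/eqP/eqP => E.
      by apply: (mulfI ht); rewrite E /t divfK.
    by rewrite E /t divfK.
  by rewrite key.
have := sum_colA b N c kk pb.
rewrite (bigD1 0) //= E1 B0 add0r.
rewrite (eq_bigr (fun _ => B a)) => [|a' ha']; last by rewrite E1; apply: eqB.
rewrite sumr_const cardC1 card_Fp // => H.
have H' : B a * (b.-1)%:R = 1 by rewrite mulr_natr.
by rewrite E1; apply: (mulIf (bm1_neq0 _ pb)); rewrite H' divfK // bm1_neq0.
Qed.

Definition colval (b m c : nat) : rat :=
  if (c < m)%N then (if c == m.-1 then 1 / (b.-1)%:R else 1 / b%:R) else 1.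

Lemma colA_val (b N c kk k2 : nat) : prime b -> mu1 b k2 = mu1 b kk ->
  (mu1 b kk <= N)%N -> colA b N c kk (digit b k2 c) = colval b (mu1 b kk) c.
Proof.
move=> pb h hN; rewrite /colval; case: ltnP => hc; last first.
  by rewrite digit_ge ?h // colA_ge.
have hm : (0 < mu1 b kk)%N by apply: leq_ltn_trans hc.
have hi : ((mu1 b kk).-1 < N)%N by rewrite prednK.
case: (eqVneq c (mu1 b kk).-1) => e.
  apply: (colA_top _ _ _ _ (Ordinal hi)) => //.
  by rewrite e -h mu1_top // h.
apply: (colA_mid _ _ _ _ (Ordinal hi)) => //=.
by rewrite ltn_neqAle e -ltnS prednK.
Qed.

Lemma prod_colval (b n m : nat) : prime b -> (m <= n)%N ->
  \prod_(c < n) colval b m c =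
  (if m != 0%N then b%:R / (b.-1)%:R else 1) / b%:R ^+ m.
Proof.
move=> pb hmn.
have -> : \prod_(c < n) colval b m c = \prod_(c < m) colval b m c.
  rewrite [RHS](big_ord_widen n (colval b m) hmn) [RHS]big_mkcond; apply: eq_bigr => c _.
  by rewrite /colval; case: ifP.
case: m hmn => [|m] _; first by rewrite big_ord0 /= expr0 divr1.
rewrite big_ord_recr /=.
rewrite (eq_bigr (fun _ => 1 / b%:R)) => [|c _]; last first.
  by rewrite /colval /= ltnS (ltnW (ltn_ord c)) (ltn_eqF (ltn_ord c)).
rewrite prodr_const card_ord /colval ltnSn eqxx exprS expr_div_n expr1n.
have h1 := b_neq0 _ pb; have h2 := bm1_neq0 _ pb.
have h3 : (b%:R : rat) ^+ m != 0 by rewrite expf_neq0.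
by field; rewrite h1 h2 h3.
Qed.

Lemma natr_forall (I : finType) (Q : pred I) :
  (([forall i, Q i])%:R : rat) = \prod_i (Q i)%:R.
Proof.
case: (boolP [forall i, Q i]) => [/forallP H|].
  by rewrite big1 // => i _; rewrite H.
rewrite negb_forall => /existsP [i Hi].
by rewrite (bigD1 i) //= (negbTE Hi) mul0r.
Qed.

Lemma stepA (I T : finType) (F : I -> T -> rat) (Q : I -> T -> bool) :
  \sum_(f : {ffun I -> T}) (\prod_i F i (f i)) * ([forall i, Q i (f i)])%:R =
  \prod_i \sum_t F i t * (Q i t)%:R.
Proof.
rewrite bigA_distr_bigA /=; apply: eq_bigr => f _.
by rewrite (natr_forall _ (fun i => Q i (f i))) -big_split.
Qed.

Lemma mat_step (b N n kk k2 : nat) :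
  \sum_(M : {ffun 'I_N * 'I_n -> 'F_b}) mat_prob b N n M *
     ([forall c : 'I_n, (\sum_(i < N) M (i, c) * digit b kk i) == digit b k2 c])%:R
  = \prod_(c < n) colA b N c kk (digit b k2 c).
Proof.
pose h := fun G : {ffun 'I_n -> {ffun 'I_N -> 'F_b}} =>
  ([ffun e : 'I_N * 'I_n => G e.2 e.1] : {ffun 'I_N * 'I_n -> 'F_b}).
pose g := fun M : {ffun 'I_N * 'I_n -> 'F_b} =>
  ([ffun c : 'I_n => ([ffun i : 'I_N => M (i, c)] : {ffun 'I_N -> 'F_b})] : {ffun 'I_n -> {ffun 'I_N -> 'F_b}}).
have hb : bijective h.
  exists g => [G|M]; first by apply/ffunP => c; apply/ffunP => i; rewrite !ffunE.
  by apply/ffunP => -[i c]; rewrite !ffunE.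
rewrite (reindex h) /=; last exact: onW_bij.
rewrite /colA -(stepA _ _ (fun (c : 'I_n) v => Pv b N c v)
                     (fun (c : 'I_n) v => Sv b N kk v == digit b k2 c)).
apply: eq_bigr => G _; congr (_ * _).
  rewrite /mat_prob /Pv /h.
  rewrite (eq_bigr (fun e : 'I_N * 'I_n => entry_prob b e.1 e.2 (G e.2 e.1))); last first.
    by move=> e _; rewrite ffunE.
  rewrite -(pair_bigA _ (fun (i : 'I_N) (c : 'I_n) => entry_prob b i c (G c i))) /=.
  by rewrite exchange_big.
do 2 f_equal; apply: eq_forallb => c; rewrite /Sv /h.
by under eq_bigr do rewrite ffunE.
Qed.

Lemma part2 (b s : nat) (k k' : 'I_s -> nat) (n N : nat) : prime b ->
     (forall j, mu1 b (k' j) = mu1 b (k j)) ->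
     (forall j, mu1 b (k j) <= n)%N ->
     (n <= N)%N ->
     prob_event b s N n k k' =
       (b%:R / (b.-1)%:R) ^+ #|[set j : 'I_s | k j != 0%N]|
       / (b%:R ^+ (\sum_(j < s) mu1 b (k j))).
Proof.
move=> pb hk' hn hN.
rewrite /prob_event (stepA _ _ (fun (j : 'I_s) M => mat_prob b N n M)
  (fun (j : 'I_s) (M : {ffun 'I_N * 'I_n -> 'F_b}) => [forall c : 'I_n,
        (\sum_(i < N) M (i, c) * digit b (k j) i) == digit b (k' j) c])).
rewrite -prodr_const expr_sum [X in _ = X / _]big_mkcond -prodf_div /=.
apply: eq_bigr => j _; rewrite mat_step.
rewrite (eq_bigr (fun c : 'I_n => colval b (mu1 b (k j)) c)) => [|c _]; last first.
  by apply: colA_val => //; apply: leq_trans (hn j) hN.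
by rewrite prod_colval // inE mu1_eq0.
Qed.

Theorem lemma2p14 (b s : nat) (k : 'I_s -> nat) :
  prime b -> (0 < s)%N ->
  (forall (j : 'I_s) (L : nat -> nat -> 'F_b), inLinf b L ->
     exists l : nat, (forall i, digit b l i = LTvec b L (k j) i) /\
                     mu1 b l = mu1 b (k j)) /\
  (forall (k' : 'I_s -> nat) (n N : nat),
     (forall j, mu1 b (k' j) = mu1 b (k j)) ->
     (forall j, mu1 b (k j) <= n)%N ->
     (n <= N)%N -> (forall j, k j < b ^ N)%N ->
     prob_event b s N n k k' =
       (b%:R / (b.-1)%:R) ^+ #|[set j : 'I_s | k j != 0%N]|
       / (b%:R ^+ (\sum_(j < s) mu1 b (k j)))).
Proof.
move=> pb _; split.
  by move=> j L hL; apply: part1.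
by move=> k' n N h1 h2 h3 _; apply: part2.
Qed.
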